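(* Let $\varphi\colon\mathcal{M}\to\mathcal{X}$ be a smooth lift, $y\in\mathcal{M}$ and $x=\varphi(y)$. Then $\varphi$ satisfies ''1 $\Rightarrow$ 1'' at $y$ if and only if $\operatorname{im}\mathrm{D}\varphi(y)=\mathrm{T}_x\mathcal{X}$. Moreover, if $\varphi$ does not satisfy ''1 $\Rightarrow$ 1'' at $y$, there is a linear cost $f\colon\mathcal{E}\to\mathbb{R}$ such that $y$ is 1-critical for $g=f\circ\varphi$ on $\mathcal{M}$ but $x$ is not stationary for $f$ on $\mathcal{X}$.
   Context: Let $\mathcal{E}$ be a finite-dimensional real inner product space and $\mathcal{M}$ a smooth manifold. A smooth lift of $\mathcal{X}\subseteq\mathcal{E}$ is a smooth map $\varphi\colon\mathcal{M}\to\mathcal{E}$ with $\varphi(\mathcal{M})=\mathcal{X}$; $\mathrm{D}\varphi(y)\colon\mathrm{T}_y\mathcal{M}\to\mathcal{E}$ is its differential. The tangent cone to $\mathcal{X}$ at $x\in\mathcal{X}$ is $\mathrm{T}_x\mathcal{X}=\{\lim_{i\to\infty}(x_i-x)/\tau_i : x_i\in\mathcal{X},\ \tau_i>0,\ \tau_i\to0\}$. For a cone $K$, $K^*=\{u\in\mathcal{E}:\langle u,v\rangle\ge0\ \forall v\in K\}$. For differentiable $f\colon\mathcal{E}\to\mathbb{R}$, $x\in\mathcal{X}$ is stationary for $f$ on $\mathcal{X}$ if $\mathrm{D}f(x)[v]\ge0$ for all $v\in\mathrm{T}_x\mathcal{X}$, i.e. $\nabla f(x)\in(\mathrm{T}_x\mathcal{X})^*$.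 With $g=f\circ\varphi$, $y\in\mathcal{M}$ is 1-critical if $(g\circ c)'(0)=0$ for every smooth curve $c\colon\mathbb{R}\to\mathcal{M}$ with $c(0)=y$. The lift satisfies ''1 $\Rightarrow$ 1'' at $y$ if for every differentiable $f$, whenever $y$ is 1-critical for $g$, $\varphi(y)$ is stationary for $f$ on $\mathcal{X}$. *)

(* Defs.v *)
From HB Require Import structures.
From mathcomp Require Import all_boot all_order all_algebra.
From mathcomp Require Import all_classical all_reals all_analysis.
Set Implicit Arguments. Unset Strict Implicit. Unset Printing Implicit Defensive.
Import Order.TTheory GRing.Theory Num.Theory.
Import numFieldNormedType.Exports.
Local Open Scope classical_set_scope.
Local Open Scope ring_scope.

Section Defs.
Variable R : realType.

Fixpoint iterD {V W : normedModType R} (vs : seq V) (F : V -> W) : V -> W :=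
  match vs with
  | [::] => F
  | v :: vs' => 'D_v (iterD vs' F)
  end.

Definition smooth_on {V W : normedModType R} (U : set V) (F : V -> W) : Prop :=
  open U /\ forall (vs : seq V) (z : V), U z -> differentiable (iterD vs F) z.

Record chart (M : topologicalType) (m : nat) := Chart {
  ch_dom : set M;
  ch_map : M -> 'rV[R]_m;
  ch_inv : 'rV[R]_m -> M;
  ch_dom_open : open ch_dom;
  ch_img_open : open (ch_map @` ch_dom);
  ch_invK : forall p, ch_dom p -> ch_inv (ch_map p) = p;
  ch_mapK : forall z, (ch_map @` ch_dom) z -> ch_map (ch_inv z) = z;
  ch_map_cont : {within ch_dom, continuous ch_map};
  ch_inv_cont : {within ch_map @` ch_dom, continuous ch_inv} }.

Definition smooth_atlas (M : topologicalType) (m : nat) (A : set (chart M m)) : Prop :=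
  (forall p : M, exists2 a, A a & ch_dom a p) /\
  (forall a b, A a -> A b ->
     smooth_on (ch_map a @` (ch_dom a `&` ch_dom b)) (ch_map b \o ch_inv a)).

Definition smooth_map (M : topologicalType) (m n : nat) (A : set (chart M m))
  (phi : M -> 'rV[R]_n) : Prop :=
  forall a, A a -> smooth_on (ch_map a @` ch_dom a) (phi \o ch_inv a).

Definition smooth_curve (M : topologicalType) (m : nat) (A : set (chart M m))
  (c : R -> M) : Prop :=
  continuous c /\
  (forall a, A a -> smooth_on (c @^-1` ch_dom a) (ch_map a \o c)).

(** Image of the differential D phi(y) : T_y M -> E, computed in a chart
    around y (T_y M identified with R^m through the chart). *)
Definition im_diff (M : topologicalType) (m n : nat) (A : set (chart M m))
  (phi : M -> 'rV[R]_n) (y : M) : set 'rV[R]_n :=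
  [set v | exists a, [/\ A a, ch_dom a y &
     exists w : 'rV[R]_m, v = 'd (phi \o ch_inv a) (ch_map a y) w]].

Definition inner (n : nat) (u v : 'rV[R]_n) : R := (u *m v^T) 0 0.

Definition tangent_cone (n : nat) (X : set 'rV[R]_n) (x : 'rV[R]_n) : set 'rV[R]_n :=
  [set v | exists (xs : nat -> 'rV[R]_n) (t : nat -> R),
     [/\ forall i, X (xs i), forall i, 0 < t i, t @ \oo --> 0 &
         (fun i => (t i)^-1 *: (xs i - x)) @ \oo --> v]].

Definition dual_cone (n : nat) (K : set 'rV[R]_n) : set 'rV[R]_n :=
  [set u | forall v, K v -> 0 <= inner u v].

Definition stationary (n : nat) (f : 'rV[R]_n -> R) (X : set 'rV[R]_n) (x : 'rV[R]_n) : Prop :=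
  forall v, tangent_cone X x v -> 0 <= 'd f x v.

Definition one_critical (M : topologicalType) (m : nat) (A : set (chart M m))
  (g : M -> R) (y : M) : Prop :=
  forall c : R -> M, smooth_curve A c -> c 0 = y -> is_derive (0 : R) (1 : R) (g \o c) 0.

Definition one_implies_one (M : topologicalType) (m n : nat) (A : set (chart M m))
  (phi : M -> 'rV[R]_n) (y : M) : Prop :=
  forall f : 'rV[R]_n -> R, (forall z, differentiable f z) ->
    one_critical A (f \o phi) y -> stationary f (range phi) (phi y).

End Defs.

(* Main.v *)
Require Import Defs.
From HB Require Import structures.
From mathcomp Require Import all_boot all_order all_algebra.
From mathcomp Require Import all_classical all_reals all_analysis.
From mathcomp Require Import ring lra.
Import Order.TTheory GRing.Theory Num.Theory.
Import numFieldNormedType.Exports.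
Local Open Scope classical_set_scope.
Local Open Scope ring_scope.
Set Implicit Arguments. Unset Strict Implicit.


Section Prod.
Variables (R : realType) (W : normedModType R).

Lemma scale_is_bilinear :
  bilinear_for
    (GRing.Scale.Law.clone _ _ *:%R _) (GRing.Scale.Law.clone _ _ *:%R _)
    (@GRing.scale R W).
Proof.
split=> [u'|u] a x y /=.
- by rewrite scalerDl scalerA.
- by rewrite scalerDr scalerA mulrC -scalerA.
Qed.
HB.instance Definition _ := bilinear_isBilinear.Build R R W W _ _ (@GRing.scale R W)
  scale_is_bilinear.

Lemma is_derive_scaleM (f : R -> R) (g : R -> W) (t : R) (df : R) (dg : W) :
  is_derive t (1:R) f df -> is_derive t (1:R) g dg ->
  is_derive t (1:R) (fun u => f u *: g u) (f t *: dg + df *: g t).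
Proof.
move=> [hf <-] [hg <-].
have dfd : differentiable f t by apply/derivable1_diffP.
have dgd : differentiable g t by apply/derivable1_diffP.
have sc : continuous (fun p : R * W => p.1 *: p.2).
  by move=> p; apply: scale_continuous.
have dbi : forall p, differentiable (fun p : R * W => (@GRing.scale R W) p.1 p.2) p.
  by move=> p; apply: differentiable_bilin.
have -> : (fun u => f u *: g u) = (fun p : R * W => (@GRing.scale R W) p.1 p.2) \o (fun u => (f u, g u)) by [].
have dc : differentiable ((fun p : R * W => (@GRing.scale R W) p.1 p.2) \o (fun u => (f u, g u))) t.
  by apply: differentiable_comp => //; apply: differentiable_pair.
apply: DeriveDef; first by apply/derivable1_diffP.
rewrite deriveE // diff_comp //; last by apply: differentiable_pair.
by rewrite diff_bilin // diff_pair //= !deriveE //.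
Qed.
End Prod.

Section Trig.
Variable R : realType.

Inductive Ptrig : (R -> R) -> Prop :=
| Pc c : Ptrig (fun _ => c)
| Psin : Ptrig sin
| Pcos : Ptrig cos
| Padd f g : Ptrig f -> Ptrig g -> Ptrig (fun t => f t + g t)
| Pmul f g : Ptrig f -> Ptrig g -> Ptrig (fun t => f t * g t).

Lemma Ptrig_der f : Ptrig f ->
  exists f', Ptrig f' /\ forall t : R, is_derive t (1:R) f (f' t).
Proof.
elim=> [c||| f1 f2 _ [d1 [P1 H1]] _ [d2 [P2 H2]] | f1 f2 P1' [d1 [P1 H1]] P2' [d2 [P2 H2]]].
- exists (fun _ => 0); split; first exact: Pc.
  by move=> t; apply: is_derive_cst.
- exists cos; split; first exact: Pcos.
  by move=> t; apply: is_derive_sin.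
- exists (fun t => (-1) * sin t); split; first by apply: Pmul; [apply: Pc|apply: Psin].
  by move=> t; apply: is_derive_eq; rewrite mulN1r.
- exists (fun t => d1 t + d2 t); split; first exact: Padd.
  move=> t; have := is_deriveD (H1 t) (H2 t); exact.
- exists (fun t => f1 t * d2 t + f2 t * d1 t); split.
    by apply: Padd; apply: Pmul.
  move=> t; have := is_deriveM (H1 t) (H2 t); exact.
Qed.
End Trig.



Section Curve.
Variables (R : realType) (m : nat) (W : normedModType R).
Variables (G : 'rV[R]_m -> W) (U : set 'rV[R]_m).
Hypothesis HU : open U.
Hypothesis HG : forall vs z, U z -> differentiable (Defs.iterD vs G) z.
Variables (p w : 'rV[R]_m) (d : R).

Definition gam (t : R) : 'rV[R]_m := p + (d * sin t) *: w.

Lemma gam_der t : is_derive t (1:R) gam ((d * cos t) *: w).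
Proof.
have h1 : is_derive t (1:R) (fun u : R => d * sin u) (d * cos t).
  have := is_deriveM (@is_derive_cst R R R d t 1) (is_derive_sin t).
  by move=> H; apply: is_derive_eq; rewrite /= scaler0 addr0.
have h2 := is_derive_scaleM h1 (@is_derive_cst R R _ w t 1).
have h3 := is_deriveD (@is_derive_cst R R _ p t 1) h2.
by apply: is_derive_eq; rewrite /cst scaler0 add0r add0r.
Qed.

Lemma gam_cont : continuous gam.
Proof.
move=> t; apply: differentiable_continuous; apply/derivable1_diffP.
by have [] := gam_der t.
Qed.

Lemma comp_gam_der (F : 'rV[R]_m -> W) t : differentiable F (gam t) ->
  is_derive t (1:R) (F \o gam) ((d * cos t) *: 'D_w F (gam t)).
Proof.
move=> dF.
have dg : differentiable gam t by apply/derivable1_diffP; have [] := gam_der t.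
have dc : differentiable (F \o gam) t by apply: differentiable_comp.
apply: DeriveDef; first by apply/derivable1_diffP.
rewrite deriveE // diff_comp // /= -(deriveE _ dg).
have [_ ->] := gam_der t.
by rewrite linearZ /= deriveE.
Qed.

Definition Ogam := gam @^-1` U.

Lemma O_open : open Ogam.
Proof. by apply: open_comp => // t _; apply: gam_cont. Qed.

Inductive Kc : (R -> W) -> Prop :=
| K0 : Kc (fun _ => 0)
| Kt s vs k : Ptrig s -> Kc k -> Kc (fun t => s t *: Defs.iterD vs G (gam t) + k t).

Lemma Kc_scale c k : Kc k -> Kc (fun t => c *: k t).
Proof.
elim=> [|s vs k' Ps _ IH].
  have -> : (fun _ : R => c *: (0:W)) = (fun _ => 0) by apply/funext=> t; rewrite scaler0.
  exact: K0.
have -> : (fun t => c *: (s t *: Defs.iterD vs G (gam t) + k' t)) =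
  (fun t => (c * s t) *: Defs.iterD vs G (gam t) + c *: k' t).
  by apply/funext=> t; rewrite scalerDr scalerA.
by apply: Kt => //; apply: Pmul => //; apply: Pc.
Qed.

Lemma Kc_der k : Kc k -> exists k', Kc k' /\ forall t, Ogam t -> is_derive t (1:R) k (k' t).
Proof.
elim=> [|s vs k0 Ps _ [k0' [Kk0' Hk0']]].
  exists (fun _ => 0); split; first exact: K0.
  by move=> t _; apply: is_derive_cst.
have [s' [Ps' Hs']] := Ptrig_der Ps.
exists (fun t => s' t *: Defs.iterD vs G (gam t) +
   ((s t * (d * cos t)) *: Defs.iterD (w :: vs) G (gam t) + k0' t)).
split.
  apply: Kt => //; apply: Kt => //.
  by apply: Pmul => //; apply: Pmul; [apply: Pc|apply: Pcos].
move=> t Ot.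
have h1 := comp_gam_der (HG vs Ot).
have h2 := is_derive_scaleM (Hs' t) h1.
have h3 := is_deriveD h2 (Hk0' t Ot).
apply: is_derive_eq.
rewrite /= scalerA addrA; congr (_ + _).
by rewrite addrC.
Qed.

Lemma iterD_gam vs : exists k, Kc k /\ forall t, Ogam t -> Defs.iterD vs (G \o gam) t = k t.
Proof.
elim: vs => [|v vs [k [Kk Hk]]].
  exists (fun t => (fun _ => 1) t *: Defs.iterD [::] G (gam t) + (fun _ => 0) t); split.
    by apply: Kt; [apply: Pc|apply: K0].
  by move=> t _ /=; rewrite scale1r addr0.
have [k' [Kk' Hk']] := Kc_der Kk.
exists (fun t => v *: k' t); split; first exact: Kc_scale.
move=> t Ot /=.
have nb : \near t, Defs.iterD vs (G \o gam) t = k t.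
  apply: filterS (open_nbhs_nbhs (conj O_open Ot)) => z Oz; exact: Hk.
rewrite (near_eq_derive _ nb).
have [dk _] := Hk' t Ot.
have dkd : differentiable k t by apply/derivable1_diffP.
rewrite deriveE // diff1E // derive1E.
by have [_ ->] := Hk' t Ot.
Qed.

Lemma smooth_gam vs t : Ogam t -> differentiable (Defs.iterD vs (G \o gam)) t.
Proof.
move=> Ot.
have [k [Kk Hk]] := iterD_gam vs.
have [k' [_ Hk']] := Kc_der Kk.
have [dk _] := Hk' t Ot.
apply/derivable1_diffP.
apply: (near_eq_derivable _ dk).
apply: filterS (open_nbhs_nbhs (conj O_open Ot)) => z Oz; by rewrite Hk.
Qed.

End Curve.



Section LinAlg.
Variable R : realType.

Lemma orth_exists (m n : nat) (D : {linear 'rV[R]_m -> 'rV[R]_n}) (v : 'rV[R]_n) :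
  ~ (exists w, v = D w) ->
  exists f : 'rV[R]_n -> R,
    (forall (a : R) (u v : 'rV[R]_n), f (a *: u + v) = a * f u + f v) /\
    (forall x, differentiable f x /\ 'd f x = f :> ('rV[R]_n -> R)) /\
    (forall w, f (D w) = 0) /\ f v < 0.
Proof.
move=> nv.
pose B := lin1_mx D.
have nsub : ~~ (v <= B)%MS.
  apply/negP => /submxP [w vE]; apply: nv; exists w; by rewrite vE mul_rV_lin1.
rewrite submxE in nsub.
have [j Hj] : exists j, (v *m cokermx B) 0 j != 0.
  apply/existsP; move: nsub; apply: contraR; rewrite negb_exists => /forallP H.
  apply/eqP/matrixP => i k; rewrite ord1; have := H k; rewrite negbK => /eqP ->; by rewrite mxE.
pose U := col j (cokermx B).
pose c := (v *m U) 0 0.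
have colm : forall z : 'rV[R]_n, (z *m U) 0 0 = (z *m cokermx B) 0 j.
  by move=> z; rewrite !mxE; apply: eq_bigr => k _; rewrite mxE.
have cE : c = (v *m cokermx B) 0 j by rewrite /c colm.
pose f := fun z : 'rV[R]_n => - c * (z *m U) 0 0.
have flin : forall (a : R) (u v : 'rV[R]_n), f (a *: u + v) = a * f u + f v.
  by move=> a u w; rewrite /f mulmxDl -scalemxAl !mxE; ring.
exists f; split => //.
split; last split.
- have lf : linear f by move=> a u w; rewrite flin.
  pose fL : {linear 'rV[R]_n -> R} := HB.pack f (GRing.isLinear.Build _ _ _ _ _ lf).
  have fc : continuous f.
    have -> : f = (fun z => \sum_(k < n) (- c * U k 0) * z 0 k).
      apply/funext => z; rewrite /f mxE mulr_sumr; apply: eq_bigr => k _.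
      by rewrite [z 0 k * _]mulrC mulrA.
    have hc : forall (l : seq 'I_n),
        continuous (fun z : 'rV[R]_n => \sum_(k <- l) (- c * U k 0) * z 0 k).
      elim => [|k l IH] z.
        have -> : (fun z : 'rV[R]_n => \sum_(k <- [::]) (- c * U k 0) * z 0 k) = cst 0.
          by apply/funext => ?; rewrite big_nil.
        exact: cst_continuous.
      have -> : (fun z : 'rV[R]_n => \sum_(k' <- k :: l) (- c * U k' 0) * z 0 k') =
        (fun z : 'rV[R]_n => (- c * U k 0) * z 0 k) +
        (fun z : 'rV[R]_n => \sum_(k' <- l) (- c * U k' 0) * z 0 k').
        by apply/funext => ?; rewrite big_cons.
      apply: continuousD; last exact: IH.
      apply: (continuousM (s:=cst (- c * U k 0)) (t:=fun z : 'rV[R]_n => z 0 k)).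
        exact: cst_continuous.
      exact: coord_continuous.
    exact: hc.
  have fcL : continuous fL by [].
  move=> x; split; first exact: (linear_differentiable x fcL).
  exact: (diff_lin x fcL).
- move=> w; rewrite /f colm -(mul_rV_lin1 D) -/B -mulmxA mulmx_coker.
  by rewrite mulmx0 mxE mulr0.
- rewrite /f -/c cE mulNr oppr_lt0 -expr2 exprn_even_gt0 //.
Qed.
End LinAlg.



Section Main.
Variables (R : realType) (M : topologicalType) (m n : nat).
Variables (A : set (chart R M m)) (HA : smooth_atlas A).
Variables (phi : M -> 'rV[R]_n) (Hphi : smooth_map A phi) (y : M).

Lemma img_ball (a : chart R M m) : ch_dom a y ->
  exists2 r : R, 0 < r & forall z, `|z| < r -> (ch_map a @` ch_dom a) (ch_map a y + z).
Proof.
move=> ya.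
have : nbhs (ch_map a y) (ch_map a @` ch_dom a).
  by apply: open_nbhs_nbhs; split; [exact: ch_img_open | exists y].
move=> /nbhs_ballP [r r0 Hr]; exists r => // z zr; apply: Hr.
by rewrite -ball_normE /ball_ /= opprD addrA subrr sub0r normrN.
Qed.

Lemma deriv_along (f : 'rV[R]_n -> R) (Hf : differentiable f (phi y))
  (c : R -> M) (Hc : smooth_curve A c) (c0 : c 0 = y)
  (a : chart R M m) (Aa : A a) (ya : ch_dom a y) :
  is_derive (0:R) (1:R) (f \o phi \o c)
    ('d f (phi y) ('d (phi \o ch_inv a) (ch_map a y) ('d (ch_map a \o c) 0 1))).
Proof.
have [cc Hcs] := Hc.
have hd : differentiable (ch_map a \o c) 0.
  by have := (Hcs a Aa).2 [::] 0; apply; rewrite /preimage /= c0.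
have Fd : differentiable (phi \o ch_inv a) (ch_map a y).
  by have := (Hphi Aa).2 [::] (ch_map a y); apply; exists y.
have hF : (phi \o ch_inv a) (ch_map a y) = phi y by rewrite /= ch_invK.
have hc0 : (ch_map a \o c) 0 = ch_map a y by rewrite /= c0.
have Fd' : differentiable (phi \o ch_inv a) ((ch_map a \o c) 0) by rewrite hc0.
have Hf' : differentiable f ((phi \o ch_inv a) ((ch_map a \o c) 0)) by rewrite hc0 hF.
have near_dom : \forall t \near (0:R), ch_dom a (c t).
  have : nbhs (c 0) (ch_dom a).
    by apply: open_nbhs_nbhs; split; [exact: ch_dom_open | rewrite c0].
  exact: cc.
apply: (@near_eq_is_derive _ _ _ (f \o (phi \o ch_inv a) \o (ch_map a \o c))).
  by apply: filterS near_dom => t ta /=; rewrite ch_invK.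
have d1 : differentiable ((phi \o ch_inv a) \o (ch_map a \o c)) 0.
  exact: differentiable_comp.
have d2 : differentiable (f \o (phi \o ch_inv a) \o (ch_map a \o c)) 0.
  by apply: differentiable_comp => //; apply: differentiable_comp.
apply: DeriveDef; first by apply/derivable1_diffP.
have Hf2 : differentiable f ((phi \o ch_inv a) (ch_map a y)) by rewrite hF.
rewrite deriveE // diff_comp //; last by apply: differentiable_comp.
by rewrite /= c0 (diff_comp Fd Hf2) /= ch_invK.
Qed.

End Main.



Section Main2.
Variables (R : realType) (M : topologicalType) (m n : nat).
Variables (A : set (chart R M m)) (HA : smooth_atlas A).
Variables (phi : M -> 'rV[R]_n) (Hphi : smooth_map A phi) (y : M).

Lemma small_d (r : R) (w : 'rV[R]_m) : 0 < r ->
  let d := r / (`|w| + 1) in 0 < d /\ d * `|w| < r /\ forall s : R, `|s| <= 1 -> `|(d * s) *: w| < r.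
Proof.
move=> r0 d.
have w1 : 0 < `|w| + 1 by rewrite ltr_wpDl.
have d0 : 0 < d by rewrite /d divr_gt0.
have dw : d * `|w| < r.
  rewrite /d mulrAC ltr_pdivrMr // ltr_pM2l //; lra.
split => //; split => // s s1.
rewrite normrZ normrM (gtr0_norm d0).
apply: le_lt_trans dw; rewrite -mulrA ler_pM2l // -[leRHS]mul1r.
by apply: ler_wpM2r.
Qed.

Lemma curve_exists (a : chart R M m) (Aa : A a) (ya : ch_dom a y) (w : 'rV[R]_m) :
  exists d : R, 0 < d /\ smooth_curve A (ch_inv a \o gam (ch_map a y) w d) /\
    (ch_inv a \o gam (ch_map a y) w d) 0 = y /\
    (ch_map a \o (ch_inv a \o gam (ch_map a y) w d)) = gam (ch_map a y) w d.
Proof.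
have [r r0 Hr] := img_ball ya.
have [d0 [_ Hd]] := small_d w r0.
set d := r / (`|w| + 1) in d0 Hd.
have inV : forall t, (ch_map a @` ch_dom a) (gam (ch_map a y) w d t).
  by move=> t; apply: Hr; apply: Hd; apply: sin_max.
exists d; split => //; split; last split.
- split.
  + move=> t; apply: continuous_comp; first exact: gam_cont.
    have := @ch_inv_cont _ _ _ a.
    rewrite continuous_open_subspace; last exact: ch_img_open.
    by move=> H; apply: H; rewrite inE.
  + move=> b Ab; split.
      apply: open_comp; last exact: ch_dom_open.
      move=> t _; apply: continuous_comp; first exact: gam_cont.
      have := @ch_inv_cont _ _ _ a.
      rewrite continuous_open_subspace; last exact: ch_img_open.
      by move=> H; apply: H; rewrite inE.
    have [_ Htr] := HA.
    have [HUo HG] := Htr a b Aa Ab.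
    move=> vs t tb.
    have Ot : Ogam (ch_map a @` (ch_dom a `&` ch_dom b)) (ch_map a y) w d t.
      have [q qa qE] := inV t.
      exists q; last by [].
      split => //; move: tb; rewrite /preimage /= -qE ch_invK //.
    exact: (smooth_gam HUo HG vs Ot).
- by rewrite /= /gam sin0 mulr0 scale0r addr0 ch_invK.
- by apply/funext => t /=; rewrite ch_mapK.
Qed.

Lemma im_T_one (Heq : im_diff A phi y = tangent_cone (range phi) (phi y)) :
  one_implies_one A phi y.
Proof.
move=> f Hf Hcrit v.
rewrite -Heq => -[a [Aa ya [w vE]]].
have [d [d0 [Hc [c0 Hmc]]]] := curve_exists Aa ya w.
have H1 := Hcrit _ Hc c0.
have H2 := deriv_along Hphi (Hf (phi y)) Hc c0 Aa ya.
rewrite Hmc in H2.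
have dg : differentiable (gam (ch_map a y) w d) 0.
  by apply/derivable1_diffP; have [] := gam_der (ch_map a y) w d 0.
rewrite -(deriveE _ dg) in H2.
have [_ E] := gam_der (ch_map a y) w d 0.
rewrite E cos0 mulr1 linearZ linearZ /= -vE in H2.
have [_ E1] := H1; have [_ E2] := H2.
rewrite E1 in E2.
have : 'd f (phi y) v = 0.
  by apply/eqP; move: E2 => /esym /eqP; rewrite mulf_eq0 (gt_eqF d0).
by move=> ->.
Qed.

End Main2.



Section Main3.
Variables (R : realType) (M : topologicalType) (m n : nat).
Variables (A : set (chart R M m)) (HA : smooth_atlas A).
Variables (phi : M -> 'rV[R]_n) (Hphi : smooth_map A phi) (y : M).

Lemma im_sub_T : im_diff A phi y `<=` tangent_cone (range phi) (phi y).
Proof.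
move=> v [a [Aa ya [w vE]]].
have [r r0 Hr] := img_ball ya.
have [d0 [_ Hd]] := small_d w r0.
set d := r / (`|w| + 1) in d0 Hd.
pose F := phi \o ch_inv a.
pose p := ch_map a y.
pose t := fun i : nat => d / i.+1%:R.
have tpos : forall i, 0 < t i by move=> i; rewrite /t divr_gt0.
have t0 : t @ \oo --> (0:R).
  have H := cvgM (cvg_cst d) (@cvg_harmonic R).
  rewrite mulr0 in H; exact: H.
have t0' : t @ \oo --> (0:R)^'.
  move=> S HS.
  have HS' : nbhs (0:R) (fun x => x != 0 -> S x) := HS.
  have H2 : \forall i \near \oo, t i != 0 -> S (t i) := t0 _ HS'.
  move: H2; apply: filterS => i Hi; apply: Hi.
  by rewrite gt_eqF.
have Fd : differentiable F p by have := (Hphi Aa).2 [::] p; apply; exists y.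
have der := diff_derivable (v:=w) Fd.
have Hl : (fun h : R => h^-1 *: ((F \o shift p) (h *: w) - F p)) @ (0:R)^' --> 'D_w F p := der.
have Hc := cvg_comp _ _ t0' Hl.
exists (fun i => F (p + t i *: w)), t; split.
- by move=> i; exists (ch_inv a (p + t i *: w)).
- exact: tpos.
- exact: t0.
- rewrite vE -(deriveE _ Fd).
  have -> : phi y = F p by rewrite /F /p /= ch_invK.
  have -> : (fun i => (t i)^-1 *: (F (p + t i *: w) - F p)) =
     (fun h : R => h^-1 *: ((F \o shift p) (h *: w) - F p)) \o t.
    by apply/funext => i; rewrite /= [p + _]addrC.
  exact: Hc.
Qed.

Lemma T_notim v : tangent_cone (range phi) (phi y) v -> ~ im_diff A phi y v ->
  exists f : 'rV[R]_n -> R,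
    (forall (a : R) (u v : 'rV[R]_n), f (a *: u + v) = a * f u + f v) /\
    (forall z, differentiable f z) /\
    one_critical A (f \o phi) y /\ ~ stationary f (range phi) (phi y).
Proof.
move=> Tv nim.
have [Hcov _] := HA; have [a Aa ya] := Hcov y.
have nv : ~ exists w, v = 'd (phi \o ch_inv a) (ch_map a y) w.
  by move=> [w E]; apply: nim; exists a; split => //; exists w.
have [f [flin [fd [forth fneg]]]] := orth_exists nv.
exists f; split => //; split; first by move=> z; exact: (fd z).1.
split.
- move=> c Hc c0.
  have H := deriv_along Hphi (fd (phi y)).1 Hc c0 Aa ya.
  by rewrite (fd _).2 forth in H.
- move=> Hst; have := Hst v Tv; rewrite (fd _).2.
  by rewrite leNgt fneg.
Qed.

End Main3.

Unset Implicit Arguments. Set Strict Implicit.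

Theorem theorem2p4 (R : realType) (M : topologicalType) (m n : nat)
  (A : set (chart R M m)) (HM : hausdorff_space M) (HA : smooth_atlas A)
  (phi : M -> 'rV[R]_n) (Hphi : smooth_map A phi) (y : M) :
  (one_implies_one A phi y <-> im_diff A phi y = tangent_cone (range phi) (phi y)) /\
  (~ one_implies_one A phi y ->
     exists f : 'rV[R]_n -> R,
       (forall (a : R) (u v : 'rV[R]_n), f (a *: u + v) = a * f u + f v) /\
       one_critical A (f \o phi) y /\ ~ stationary f (range phi) (phi y)).
Proof.
have sub := im_sub_T Hphi (y:=y).
have key : ~ im_diff A phi y = tangent_cone (range phi) (phi y) ->
    exists v, tangent_cone (range phi) (phi y) v /\ ~ im_diff A phi y v.
  move=> neq; apply: contrapT => nex; apply: neq.
  rewrite eqEsubset; split => // v Tv.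
  apply: contrapT => nv; apply: nex; by exists v.
split; first split.
- move=> H11; apply: contrapT => neq.
  have [v [Tv nv]] := key neq.
  have [f [_ [fd [fc fns]]]] := T_notim HA Hphi Tv nv.
  by apply: fns; apply: H11.
- exact: im_T_one.
- move=> n11.
  have neq : ~ im_diff A phi y = tangent_cone (range phi) (phi y).
    by move=> E; apply: n11; apply: im_T_one.
  have [v [Tv nv]] := key neq.
  have [f [fl [_ [fc fns]]]] := T_notim HA Hphi Tv nv.
  by exists f.
Qed.
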